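(* Let $P=K\overline{K}$ and $Q=L\overline{L}$ in $U_{K,L,norm}$. Then $P$ and $Q$ are central idempotents, $PQ=QP=0$, and $U_{K,L,norm}=PU_{K,L,norm}P\oplus QU_{K,L,norm}Q$ is a direct sum of two two-sided ideals. Moreover there is an algebra isomorphism $U_{K,L,norm}\to U_q(sl_2)\oplus U_q(sl_2)$ given by $K\mapsto k\oplus0$, $\overline{K}\mapsto k^{-1}\oplus0$, $PE\mapsto e\oplus0$, $PF\mapsto f\oplus0$, $L\mapsto0\oplus k$, $\overline{L}\mapsto0\oplus k^{-1}$, $QE\mapsto0\oplus e$, $QF\mapsto0\oplus f$ (so $P\mapsto\mathbf{1}\oplus0$, $Q\mapsto0\oplus\mathbf{1}$).
   Context: Fix $q\in\mathbb{C}$, $q\neq 0,\pm1$. $U_q(sl_2)$ is the unital associative $\mathbb{C}$-algebra generated by $k,k^{-1},e,f$ with relations $kk^{-1}=k^{-1}k=\mathbf{1}$, $ke=q^2ek$, $kf=q^{-2}fk$, $ef-fe=(k-k^{-1})/(q-q^{-1})$. $U_{K,L,norm}$ is the unital associative $\mathbb{C}$-algebra generated by $K,\overline{K},L,\overline{L},E,F$ subject to $K\overline{K}K=K$, $\overline{K}K\overline{K}=\overline{K}$, $K\overline{K}=\overline{K}K$, $L\overline{L}L=L$, $\overline{L}L\overline{L}=\overline{L}$, $L\overline{L}=\overline{L}L$, $K\overline{K}+L\overline{L}=\mathbf{1}$, $KE=q^2EK$, $LE=q^2EL$, $\overline{K}E=q^{-2}E\overline{K}$, $\overline{L}E=q^{-2}E\overline{L}$,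 $KF=q^{-2}FK$, $LF=q^{-2}FL$, $\overline{K}F=q^2F\overline{K}$, $\overline{L}F=q^2F\overline{L}$, $EF-FE=\frac{(K+L)-(\overline{K}+\overline{L})}{q-q^{-1}}$. *)

(* Defs.v *)
From HB Require Import structures.
From mathcomp Require Import all_boot all_order all_algebra.
Set Implicit Arguments. Unset Strict Implicit. Unset Printing Implicit Defensive.
Import GRing.Theory.
Local Open Scope ring_scope.

Definition Uq_rel (F : fieldType) (q : F) (B : algType F) (k ki e f : B) : Prop :=
  [/\ k * ki = 1, ki * k = 1,
      k * e = q ^+ 2 *: (e * k),
      k * f = q ^- 2 *: (f * k)
    & e * f - f * e = (q - q^-1)^-1 *: (k - ki)].

(* U is (a model of) U_q(sl_2): the algebra presented by generators k, ki, e, f and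
   the relations Uq_rel, characterised by its universal property. *)
Definition is_Uq (F : fieldType) (q : F) (U : algType F) (k ki e f : U) : Prop :=
  Uq_rel q k ki e f /\
  forall (B : algType F) (k' ki' e' f' : B), Uq_rel q k' ki' e' f' ->
    (exists phi : {lrmorphism U -> B},
        [/\ phi k = k', phi ki = ki', phi e = e' & phi f = f']) /\
    (forall phi psi : {lrmorphism U -> B},
        [/\ phi k = k', phi ki = ki', phi e = e' & phi f = f'] ->
        [/\ psi k = k', psi ki = ki', psi e = e' & psi f = f'] ->
        forall x, phi x = psi x).

(* Defining relations of U_{K,L,norm}; Kb, Lb stand for \overline{K}, \overline{L}. *)
Definition UKL_rel (F : fieldType) (q : F) (B : algType F) (K Kb L Lb E Fg : B) : Prop :=
  [/\ [/\ K * Kb * K = K, Kb * K * Kb = Kb & K * Kb = Kb * K] /\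
      [/\ L * Lb * L = L, Lb * L * Lb = Lb & L * Lb = Lb * L],
      K * Kb + L * Lb = 1,
      [/\ K * E = q ^+ 2 *: (E * K), L * E = q ^+ 2 *: (E * L),
          Kb * E = q ^- 2 *: (E * Kb) & Lb * E = q ^- 2 *: (E * Lb)],
      [/\ K * Fg = q ^- 2 *: (Fg * K), L * Fg = q ^- 2 *: (Fg * L),
          Kb * Fg = q ^+ 2 *: (Fg * Kb) & Lb * Fg = q ^+ 2 *: (Fg * Lb)]
    & E * Fg - Fg * E = (q - q^-1)^-1 *: ((K + L) - (Kb + Lb))].

Definition is_UKL (F : fieldType) (q : F) (A : algType F) (K Kb L Lb E Fg : A) : Prop :=
  UKL_rel q K Kb L Lb E Fg /\
  forall (B : algType F) (K' Kb' L' Lb' E' F' : B), UKL_rel q K' Kb' L' Lb' E' F' ->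
    (exists phi : {lrmorphism A -> B},
        [/\ phi K = K', phi Kb = Kb', phi L = L', phi Lb = Lb' & (phi E = E' /\ phi Fg = F')]) /\
    (forall phi psi : {lrmorphism A -> B},
        [/\ phi K = K', phi Kb = Kb', phi L = L', phi Lb = Lb' & (phi E = E' /\ phi Fg = F')] ->
        [/\ psi K = K', psi Kb = Kb', psi L = L', psi Lb = Lb' & (psi E = E' /\ psi Fg = F')] ->
        forall x, phi x = psi x).

Definition in_corner (R : pzRingType) (P x : R) : Prop := exists y, x = P * y * P.

Definition two_sided_ideal (R : pzRingType) (S : R -> Prop) : Prop :=
  [/\ S 0, (forall x y, S x -> S y -> S (x + y)),
      (forall a x, S x -> S (a * x)) & (forall a x, S x -> S (x * a))].

(* Main.v *)
Require Import Defs.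
From HB Require Import structures.
From mathcomp Require Import all_boot all_order all_algebra.
Set Implicit Arguments. Unset Strict Implicit. Unset Printing Implicit Defensive.
Import GRing.Theory Num.Theory.
Local Open Scope ring_scope.

Section Conj.
Variables (C : fieldType) (A : algType C) (u v : A).
Hypotheses (huv : u * v = 1) (hvu : v * u = 1).
Definition conjm (x : A) := u * x * v.
Lemma conjm_lin : linear conjm.
Proof. by move=> a x y; rewrite /conjm mulrDr mulrDl -scalerAr -scalerAl. Qed.
Lemma conjm_mm : monoid_morphism conjm.
Proof.
split; first by rewrite /conjm mulr1 huv.
by move=> x y; rewrite /conjm !mulrA -(mulrA _ v u) hvu mulr1.
Qed.
HB.instance Definition _ := GRing.isLinear.Build C A A *:%R conjm conjm_lin.
HB.instance Definition _ := GRing.isMonoidMorphism.Build A A conjm conjm_mm.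
Definition conjlr : {lrmorphism A -> A} := conjm.
End Conj.

Section Glue.
Variables (C : fieldType) (A U : algType C) (P Q : A).
Hypotheses (hPc : forall x, P * x = x * P) (hQc : forall x, Q * x = x * Q)
  (PP : P * P = P) (QQ : Q * Q = Q) (PQ : P * Q = 0) (QP : Q * P = 0)
  (hs : P + Q = 1).
Variables (a1 a2 : {lrmorphism U -> A}).
Definition gluem (z : (U * U)%type) : A := a1 z.1 * P + a2 z.2 * Q.
Lemma gluem_lin : linear gluem.
Proof.
move=> a [x1 x2] [y1 y2]; rewrite /gluem /= !linearP /= !mulrDl -!scalerAl.
by rewrite scalerDr addrACA.
Qed.
Lemma gluem_mm : monoid_morphism gluem.
Proof.
split; first by rewrite /gluem /= !rmorph1 !mul1r.
move=> [x1 x2] [y1 y2]; rewrite /gluem /= !rmorphM /=.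
rewrite mulrDl !mulrDr.
have e1 : a1 x1 * P * (a1 y1 * P) = a1 x1 * a1 y1 * P.
  by rewrite mulrA -(mulrA _ P) hPc !mulrA -mulrA PP.
have e2 : a1 x1 * P * (a2 y2 * Q) = 0.
  by rewrite mulrA -(mulrA _ P) hPc !mulrA -mulrA PQ mulr0.
have e3 : a2 x2 * Q * (a1 y1 * P) = 0.
  by rewrite mulrA -(mulrA _ Q) hQc !mulrA -mulrA QP mulr0.
have e4 : a2 x2 * Q * (a2 y2 * Q) = a2 x2 * a2 y2 * Q.
  by rewrite mulrA -(mulrA _ Q) hQc !mulrA -mulrA QQ.
by rewrite e1 e2 e3 e4 addr0 add0r.
Qed.
HB.instance Definition _ := GRing.isLinear.Build C (U * U)%type A *:%R gluem gluem_lin.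
HB.instance Definition _ := GRing.isMonoidMorphism.Build (U * U)%type A gluem gluem_mm.
Definition gluelr : {lrmorphism (U * U)%type -> A} := gluem.
End Glue.

Lemma inv_comm (C : fieldType) (R : algType C) (c : C) (k ki x : R) :
  k * ki = 1 -> ki * k = 1 -> c != 0 -> k * x = c *: (x * k) ->
  ki * x = c^-1 *: (x * ki).
Proof.
move=> h1 h2 hc h.
have : x * k = c^-1 *: (k * x) by rewrite h scalerA mulVf // scale1r.
move=> h'.
rewrite -[ki * x]mulr1 -h1 mulrA -(mulrA ki) h' -scalerAr -scalerAl.
by rewrite !mulrA h2 mul1r.
Qed.

Section PairLemmas.
Variables (C : fieldType) (U : algType C).
Implicit Types (a b c d : U).
Lemma pairM a b c d : ((a,b) * (c,d) : U * U) = (a*c, b*d). Proof. by []. Qed.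
Lemma pairZ (x : C) a b : (x *: (a,b) : U * U) = (x *: a, x *: b). Proof. by []. Qed.
Lemma pairD a b c d : ((a,b) + (c,d) : U * U) = (a+c, b+d). Proof. by []. Qed.
Lemma pairB a b c d : ((a,b) - (c,d) : U * U) = (a-c, b-d). Proof. by []. Qed.
Lemma pair1 : (1 : U * U) = (1, 1). Proof. by []. Qed.
End PairLemmas.
Theorem proposition5 (C : numClosedFieldType) (q : C)
  (hq0 : q != 0) (hq1 : q != 1) (hqm1 : q != -1)
  (A : algType C) (K Kb L Lb E Fg : A) (hA : is_UKL q K Kb L Lb E Fg)
  (U : algType C) (k ki e f : U) (hU : is_Uq q k ki e f) :
  let P := K * Kb in let Q := L * Lb in
  [/\ (* P, Q central idempotents *)
      [/\ P * P = P, Q * Q = Q, (forall x, P * x = x * P) & (forall x, Q * x = x * Q)],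
      (* orthogonality *)
      P * Q = 0 /\ Q * P = 0,
      (* A = PAP (+) QAQ, direct sum of two two-sided ideals *)
      [/\ two_sided_ideal (in_corner P), two_sided_ideal (in_corner Q)
        & forall x : A, exists! yz : (A * A)%type,
            [/\ in_corner P yz.1, in_corner Q yz.2 & x = yz.1 + yz.2]]
    & (* algebra isomorphism A -> U (+) U *)
      exists phi : {lrmorphism A -> (U * U)%type},
        [/\ bijective phi,
            [/\ phi K = (k, 0), phi Kb = (ki, 0), phi (P * E) = (e, 0) & phi (P * Fg) = (f, 0)],
            [/\ phi L = (0, k), phi Lb = (0, ki), phi (Q * E) = (0, e) & phi (Q * Fg) = (0, f)]
          & phi P = (1, 0) /\ phi Q = (0, 1)]].
Proof.
case: (hA) => hrel huniv.
case: (hrel) => [[[hK1 hK2 hK3] [hL1 hL2 hL3]] hsum [hKE hLE hKbE hLbE] [hKF hLF hKbF hLbF] hEF].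
move=> P Q.
have q2 : q ^+ 2 != 0 by rewrite expf_neq0.
have PP : P * P = P by rewrite /P mulrA hK1.
have QQ : Q * Q = Q by rewrite /Q mulrA hL1.
have hPQ : P + Q = 1 by [].
have eQ : Q = 1 - P by rewrite -hPQ addrC addKr.
have eP : P = 1 - Q by rewrite -hPQ addrK.
have PQ : P * Q = 0 by rewrite eQ mulrBr mulr1 PP subrr.
have QP : Q * P = 0 by rewrite eQ mulrBl mul1r PP subrr.
have KP : K * P = K by rewrite /P hK3 mulrA hK1.
have PK : P * K = K by rewrite /P hK1.
have KbP : Kb * P = Kb by rewrite /P mulrA hK2.
have PKb : P * Kb = Kb by rewrite /P hK3 hK2.
have LQ : L * Q = L by rewrite /Q hL3 mulrA hL1.
have QL : Q * L = L by rewrite /Q hL1.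
have LbQ : Lb * Q = Lb by rewrite /Q mulrA hL2.
have QLb : Q * Lb = Lb by rewrite /Q hL3 hL2.
have PL : P * L = 0 by rewrite -QL mulrA PQ mul0r.
have LP : L * P = 0 by rewrite -LQ -mulrA QP mulr0.
have PLb : P * Lb = 0 by rewrite -QLb mulrA PQ mul0r.
have LbP : Lb * P = 0 by rewrite -LbQ -mulrA QP mulr0.
have QK : Q * K = 0 by rewrite -PK mulrA QP mul0r.
have KQ : K * Q = 0 by rewrite -KP -mulrA PQ mulr0.
have QKb : Q * Kb = 0 by rewrite -PKb mulrA QP mul0r.
have KbQ : Kb * Q = 0 by rewrite -KbP -mulrA PQ mulr0.
have cq : q ^- 2 * q ^+ 2 = 1 by rewrite mulVf.
have PE : P * E = E * P.
  by rewrite /P -mulrA hKbE -scalerAr (mulrA K E) hKE -scalerAl scalerA cq scale1r -mulrA.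
have QE : Q * E = E * Q.
  by rewrite /Q -mulrA hLbE -scalerAr (mulrA L E) hLE -scalerAl scalerA cq scale1r -mulrA.
have PF : P * Fg = Fg * P.
  by rewrite /P -mulrA hKbF -scalerAr (mulrA K Fg) hKF -scalerAl scalerA mulrC cq scale1r -mulrA.
have QF : Q * Fg = Fg * Q.
  by rewrite /Q -mulrA hLbF -scalerAr (mulrA L Fg) hLF -scalerAl scalerA mulrC cq scale1r -mulrA.
have uu : (P - Q) * (P - Q) = 1.
  by rewrite mulrBl !mulrBr PP QQ PQ QP subr0 sub0r opprK.
have hcg : forall x, (P - Q) * x = x * (P - Q) -> conjlr uu uu x = x.
  by move=> x h; rewrite /= /conjm h -mulrA uu mulr1.
have hcent : forall x, conjlr uu uu x = x.
  have [_ hU2] := huniv A K Kb L Lb E Fg hrel.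
  apply: (hU2 (conjlr uu uu) (idfun : {lrmorphism A -> A})); last by [].
  split; try split; apply: hcg; rewrite mulrBl mulrBr.
  - by rewrite PK QK KP KQ.
  - by rewrite PKb QKb KbP KbQ.
  - by rewrite PL QL LP LQ.
  - by rewrite PLb QLb LbP LbQ.
  - by rewrite PE QE.
  - by rewrite PF QF.
have two : (2%:R : C) != 0 by rewrite pnatr_eq0.
have Qc : forall x, Q * x = x * Q.
  move=> x; have := hcent x; rewrite /= /conjm => h.
  have {}h : (P - Q) * x = x * (P - Q) by rewrite -[LHS]mulr1 -uu mulrA h.
  move: h; rewrite eP !mulrBl mul1r !mulrBr mulr1 -!addrA => /addrI.
  rewrite -!opprD => /oppr_inj; rewrite -!mulr2n -!scaler_nat.
  by move/(congr1 (fun y => 2%:R^-1 *: y)); rewrite !scalerA mulVf // !scale1r.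
have Pc : forall x, P * x = x * P.
  by move=> x; rewrite eP mulrBl mulrBr mul1r mulr1 Qc.
have defP : P = K * Kb by [].
have defQ : Q = L * Lb by [].
clearbody P Q.
have cP : forall y, P * y * P = P * y by move=> y; rewrite -mulrA -Pc mulrA PP.
have cQ : forall y, Q * y * Q = Q * y by move=> y; rewrite -mulrA -Qc mulrA QQ.
have ideal : forall R : A, (forall x : A, R * x = x * R) -> R * R = R ->
    (forall y, R * y * R = R * y) -> two_sided_ideal (in_corner R).
  move=> R Rc RR cR; split.
  - by exists 0; rewrite mulr0 mul0r.
  - by move=> x y [a ->] [b ->]; exists (a + b); rewrite mulrDr mulrDl.
  - by move=> a x [y ->]; exists (a * y); rewrite !cR mulrA -Rc -mulrA.
  - by move=> a x [y ->]; exists (y * a); rewrite !cR mulrA.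
split.
- by split.
- by split.
- split; [exact: ideal | exact: ideal |].
  move=> x; exists (P * x, Q * x); split.
    split; [by exists x; rewrite cP | by exists x; rewrite cQ |].
    by rewrite -mulrDl hPQ mul1r.
  move=> [y z] /= [[a ->] [b ->] ->]; congr (_, _).
    by rewrite !cP mulrDr !mulrA PP PQ !mul0r addr0.
  by rewrite !cQ mulrDr !mulrA QQ QP !mul0r add0r.
case: hU => urel uuniv.
case: (urel) => hk1 hk2 hke hkf hef.
have hkie : ki * e = q ^- 2 *: (e * ki) := inv_comm hk1 hk2 q2 hke.
have hkif : ki * f = q ^+ 2 *: (f * ki).
  by rewrite -[q ^+ 2]invrK; apply: (inv_comm hk1 hk2) => //; rewrite invr_neq0.
have rel2 : UKL_rel q ((k, 0) : (U * U)%type) (ki, 0) (0, k) (0, ki) (e, e) (f, f).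
  split.
  - by split; split; rewrite !pairM; congr pair;
      rewrite ?hk1 ?hk2 ?mul1r ?mulr0.
  - by rewrite !pairM pairD hk1 !mulr0 addr0 add0r.
  - by split; rewrite !pairM pairZ ?hke ?hkie ?mulr0 ?mul0r ?scaler0.
  - by split; rewrite !pairM pairZ ?hkf ?hkif ?mulr0 ?mul0r ?scaler0.
  - by rewrite !pairM !pairD /= pairZ hef !addr0 !add0r.
case: ((huniv _ _ _ _ _ _ _ rel2).1) => phi1 [hK1' hKb1' hL1' hLb1' [hE1' hF1']].
have [phi hphi] : exists phi : {lrmorphism A -> (U * U)%type}, forall x, phi x = phi1 x
  by exists phi1.
have hK' : phi K = (k, 0) := etrans (hphi K) hK1'.
have hKb' : phi Kb = (ki, 0) := etrans (hphi Kb) hKb1'.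
have hL' : phi L = (0, k) := etrans (hphi L) hL1'.
have hLb' : phi Lb = (0, ki) := etrans (hphi Lb) hLb1'.
have hE' : phi E = (e, e) := etrans (hphi E) hE1'.
have hF' : phi Fg = (f, f) := etrans (hphi Fg) hF1'.
have phiM : forall x y, phi (x * y) = phi x * phi y by move=> x y; exact: rmorphM.
have phiD : forall x y, phi (x + y) = phi x + phi y by move=> x y; exact: rmorphD.
have phiP : phi P = (1, 0) by rewrite defP phiM hK' hKb' pairM hk1 mulr0.
have phiQ : phi Q = (0, 1) by rewrite defQ phiM hL' hLb' pairM hk1 mulr0.
have cPm : forall x y, P * x * (P * y) = P * (x * y).
  by move=> x y; rewrite mulrA -(mulrA P x P) -(Pc x) mulrA PP -mulrA.
have cQm : forall x y, Q * x * (Q * y) = Q * (x * y).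
  by move=> x y; rewrite mulrA -(mulrA Q x Q) -(Qc x) mulrA QQ -mulrA.
have rel1 : Uq_rel q (K + Q) (Kb + Q) (P * E) (P * Fg).
  split.
  - by rewrite mulrDl !mulrDr -defP KQ QKb QQ addr0 add0r.
  - by rewrite mulrDl !mulrDr -hK3 -defP KbQ QK QQ addr0 add0r.
  - rewrite mulrDl mulrA KP mulrA QP mul0r addr0 hKE mulrDr.
    by rewrite -(mulrA P E Q) -(Qc E) mulrA PQ mul0r addr0 (Pc E) -mulrA PK.
  - rewrite mulrDl mulrA KP mulrA QP mul0r addr0 hKF mulrDr.
    by rewrite -(mulrA P Fg Q) -(Qc Fg) mulrA PQ mul0r addr0 (Pc Fg) -mulrA PK.
  - rewrite !cPm -mulrBr hEF -scalerAr; congr (_ *: _).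
    by rewrite mulrBr !mulrDr PK PL PKb PLb !addr0 opprD addrACA subrr addr0.
have rel1' : Uq_rel q (L + P) (Lb + P) (Q * E) (Q * Fg).
  split.
  - by rewrite mulrDl !mulrDr -defQ LP PLb PP addr0 add0r addrC.
  - by rewrite mulrDl !mulrDr -hL3 -defQ LbP PL PP addr0 add0r addrC.
  - rewrite mulrDl mulrA LQ mulrA PQ mul0r addr0 hLE mulrDr.
    by rewrite -(mulrA Q E P) -(Pc E) mulrA QP mul0r addr0 (Qc E) -mulrA QL.
  - rewrite mulrDl mulrA LQ mulrA PQ mul0r addr0 hLF mulrDr.
    by rewrite -(mulrA Q Fg P) -(Pc Fg) mulrA QP mul0r addr0 (Qc Fg) -mulrA QL.
  - rewrite !cQm -mulrBr hEF -scalerAr; congr (_ *: _).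
    by rewrite mulrBr !mulrDr QK QL QKb QLb !add0r opprD addrACA subrr addr0.
case: ((uuniv _ _ _ _ _ rel1).1) => b1 [hb1k hb1ki hb1e hb1f].
case: ((uuniv _ _ _ _ _ rel1').1) => b2 [hb2k hb2ki hb2e hb2f].
have [a1 ha1] : exists a1 : {lrmorphism U -> A}, forall x, a1 x = b1 x by exists b1.
have [a2 ha2] : exists a2 : {lrmorphism U -> A}, forall x, a2 x = b2 x by exists b2.
have a1k : a1 k = K + Q := etrans (ha1 k) hb1k.
have a1ki : a1 ki = Kb + Q := etrans (ha1 ki) hb1ki.
have a1e : a1 e = P * E := etrans (ha1 e) hb1e.
have a1f : a1 f = P * Fg := etrans (ha1 f) hb1f.
have a2k : a2 k = L + P := etrans (ha2 k) hb2k.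
have a2ki : a2 ki = Lb + P := etrans (ha2 ki) hb2ki.
have a2e : a2 e = Q * E := etrans (ha2 e) hb2e.
have a2f : a2 f = Q * Fg := etrans (ha2 f) hb2f.
have a10 : a1 0 = 0 by exact: rmorph0.
have a20 : a2 0 = 0 by exact: rmorph0.
pose g := gluelr Pc Qc PP QQ PQ QP hPQ a1 a2.
have gE : forall z, g z = a1 z.1 * P + a2 z.2 * Q by [].
have hgphi : forall x, g (phi x) = x.
  have [_ hu] := huniv A K Kb L Lb E Fg hrel.
  have H1 : [/\ (g \o phi) K = K, (g \o phi) Kb = Kb, (g \o phi) L = L,
      (g \o phi) Lb = Lb & ((g \o phi) E = E /\ (g \o phi) Fg = Fg)].
    rewrite /= hK' hKb' hL' hLb' hE' hF' !gE /= a1k a1ki a2k a2ki a1e a2e a1f a2f a10 a20 !mul0r !addr0 !add0r !mulrDl.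
    by rewrite KP QP KbP LQ PQ LbQ !cP !cQ !addr0 -!mulrDl hPQ !mul1r.
  move=> x; exact: (hu (g \o phi) (idfun : {lrmorphism A -> A}) H1 _ x).
have h1 : forall u, (phi (a1 u)).1 = u.
  have [_ hu] := uuniv U k ki e f urel.
  have H1 : [/\ (fst \o phi \o a1) k = k, (fst \o phi \o a1) ki = ki,
      (fst \o phi \o a1) e = e & (fst \o phi \o a1) f = f].
    rewrite /= a1k a1ki a1e a1f !phiD !phiM hK' hKb' phiP hE' hF' phiQ.
    by rewrite /= !addr0 !mul1r.
  move=> u; exact: (hu (fst \o phi \o a1) (idfun : {lrmorphism U -> U}) H1 _ u).
have h2 : forall v, (phi (a2 v)).2 = v.
  have [_ hu] := uuniv U k ki e f urel.
  have H1 : [/\ (snd \o phi \o a2) k = k, (snd \o phi \o a2) ki = ki,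
      (snd \o phi \o a2) e = e & (snd \o phi \o a2) f = f].
    rewrite /= a2k a2ki a2e a2f !phiD !phiM hL' hLb' phiP hE' hF' phiQ.
    by rewrite /= !addr0 !mul1r.
  move=> u; exact: (hu (snd \o phi \o a2) (idfun : {lrmorphism U -> U}) H1 _ u).
have fa1 : forall u, phi (a1 u) * (1, 0) = (u, 0).
  by move=> u; move: (h1 u); case: (phi (a1 u)) => u1 u2 /= ->; rewrite pairM mulr1 mulr0.
have fa2 : forall v, phi (a2 v) * (0, 1) = (0, v).
  by move=> v; move: (h2 v); case: (phi (a2 v)) => u1 u2 /= ->; rewrite pairM mulr1 mulr0.
exists phi; split.
- exists g; first exact: hgphi.
  by move=> [u v]; rewrite gE phiD !phiM phiP phiQ /= fa1 fa2 pairD addr0 add0r.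
- by split; rewrite ?phiM ?phiP ?hE' ?hF' // pairM mul1r mul0r.
- by split; rewrite ?phiM ?phiQ ?hE' ?hF' // pairM mul1r mul0r.
- by split.
Qed.
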